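(* Let $m\ge3$, let $(f,\Gamma)$ be an elliptic data for conformal metrics and let $c\le0$ be a constant. Then there is no conformal metric $g=e^{2\rho}g_0$ on $\overline{\mathbb{S}^m_+}$ with $\rho\in C^{2,\alpha}(\overline{\mathbb{S}^m_+})$ such that $$f(\lambda(g))=0\ \text{ (with }\lambda(g)\in\overline\Gamma)\ \text{in }\overline{\mathbb{S}^m_+},\qquad h(g)=c\ \text{on }\partial\mathbb{S}^m_+ .$$
   Context: $\mathbb{S}^m\subset\mathbb{R}^{m+1}$ is the unit sphere with round metric $g_0$, $\nabla$ its gradient; $\mathbb{S}^m_+=\{x_{m+1}>0\}$. For $g=e^{2\rho}g_0$, $\lambda(g)=(\lambda_1,\dots,\lambda_m)$ are the eigenvalues of $g^{-1}\mathrm{Sch}(g)$, $\mathrm{Sch}(g)=\frac{1}{m-2}\big(\mathrm{Ric}(g)-\frac{R(g)}{2(m-1)}g\big)$. Let $\Gamma_m=\{x:x_i>0\ \forall i\}$, $\Gamma_1=\{x:\sum x_i>0\}$. Elliptic data: $(f,\Gamma)$ with $\Gamma\subset\mathbb{R}^m$ an open convex symmetric cone, $\Gamma_m\subset\Gamma\subset\Gamma_1$, and $f\in C^0(\overline\Gamma)\cap C^1(\Gamma)$ symmetric, $f=0$ on $\partial\Gamma$, $f>0$ on $\Gamma$, homogeneous of degree 1, $\nabla f\in\Gamma_m$ on $\Gamma$. Mean curvature of $\partial\mathbb{S}^m_+$: $h(g)=-e^{-\rho}\langle\nabla\rho,e_{m+1}\rangle$, the normalized mean curvature with respect to $g$ and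 the unit normal $e^{-\rho}e_{m+1}$ pointing into $\mathbb{S}^m_+$ (with this convention the flat unit ball, viewed conformally on $\mathbb{S}^m_+$, has $h=1$). *)

(* Defs.v *)
From Stdlib Require Import Reals Lra Lia.
Open Scope R_scope.

(* Vectors are functions nat -> R; a "vector of R^n" has zero coordinates
   from index n on.  For R^{m+1}, coordinate index m plays the role of x_{m+1}. *)
Fixpoint sumn (n : nat) (F : nat -> R) : R :=
  match n with O => 0 | S k => sumn k F + F k end.

Definition vec (n : nat) (x : nat -> R) : Prop := forall k, (n <= k)%nat -> x k = 0.
Definition dot (n : nat) (x y : nat -> R) : R := sumn n (fun k => x k * y k).
Definition dist (n : nat) (x y : nat -> R) : R := sqrt (sumn n (fun k => (x k - y k) ^ 2)).
Definition vadd (x y : nat -> R) : nat -> R := fun k => x k + y k.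
Definition vscal (a : R) (x : nat -> R) : nat -> R := fun k => a * x k.
Definition shift (x : nat -> R) (i : nat) (t : R) : nat -> R :=
  fun k => if Nat.eqb k i then x k + t else x k.

Definition perm_on (m : nat) (s : nat -> nat) : Prop :=
  (forall k, (k < m)%nat -> (s k < m)%nat) /\
  (forall k l, (k < m)%nat -> (l < m)%nat -> s k = s l -> k = l) /\
  (forall k, (m <= k)%nat -> s k = k).

Definition closure (m : nat) (G : (nat -> R) -> Prop) (x : nat -> R) : Prop :=
  vec m x /\ forall eps, 0 < eps -> exists y, G y /\ dist m x y < eps.

Definition elliptic_data (m : nat) (f : (nat -> R) -> R) (G : (nat -> R) -> Prop) : Prop :=
  (forall x, G x -> vec m x) /\
  (forall x, G x -> exists eps, 0 < eps /\ forall y, vec m y -> dist m x y < eps -> G y) /\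
  (forall x y t, G x -> G y -> 0 <= t <= 1 -> G (vadd (vscal t x) (vscal (1 - t) y))) /\
  (forall x t, G x -> 0 < t -> G (vscal t x)) /\
  (forall x s, perm_on m s -> G x -> G (fun k => x (s k))) /\
  (* Gamma_m subset Gamma subset Gamma_1 *)
  (forall x, vec m x -> (forall k, (k < m)%nat -> 0 < x k) -> G x) /\
  (forall x, G x -> 0 < sumn m x) /\
  (forall x, closure m G x -> forall eps, 0 < eps -> exists delta, 0 < delta /\
      forall y, closure m G y -> dist m x y < delta -> Rabs (f y - f x) < eps) /\
  (exists Df : nat -> (nat -> R) -> R,
      (forall x i, G x -> (i < m)%nat ->
         derivable_pt_lim (fun t => f (shift x i t)) 0 (Df i x)) /\
      (forall x i, G x -> (i < m)%nat -> forall eps, 0 < eps -> exists delta, 0 < delta /\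
         forall y, G y -> dist m x y < delta -> Rabs (Df i y - Df i x) < eps) /\
      (forall x i, G x -> (i < m)%nat -> 0 < Df i x)) /\
  (forall x s, perm_on m s -> closure m G x -> f (fun k => x (s k)) = f x) /\
  (forall x, closure m G x -> ~ G x -> f x = 0) /\
  (forall x, G x -> 0 < f x) /\
  (forall x t, closure m G x -> 0 < t -> f (vscal t x) = t * f x).

(* rho : R^n -> R (values only read on vectors of R^n) is C^2 with
   alpha-Hoelder second partial derivatives. *)
Definition C2alpha (n : nat) (alpha : R) (rho : (nat -> R) -> R) : Prop :=
  exists (D1 : nat -> (nat -> R) -> R) (D2 : nat -> nat -> (nat -> R) -> R) (C : R),
    (forall x i, vec n x -> (i < n)%nat ->
       derivable_pt_lim (fun t => rho (shift x i t)) 0 (D1 i x)) /\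
    (forall x i j, vec n x -> (i < n)%nat -> (j < n)%nat ->
       derivable_pt_lim (fun t => D1 i (shift x j t)) 0 (D2 i j x)) /\
    (forall x i, vec n x -> (i < n)%nat -> forall eps, 0 < eps -> exists delta, 0 < delta /\
       forall y, vec n y -> dist n x y < delta -> Rabs (D1 i y - D1 i x) < eps) /\
    (forall x y i j, vec n x -> vec n y -> (i < n)%nat -> (j < n)%nat ->
       Rabs (D2 i j x - D2 i j y) <= C * Rpower (dist n x y) alpha).

Definition on_sphere (m : nat) (x : nat -> R) : Prop :=
  vec (S m) x /\ dot (S m) x x = 1.
Definition closed_hemi (m : nat) (x : nat -> R) : Prop := on_sphere m x /\ 0 <= x m.
Definition hemi_boundary (m : nat) (x : nat -> R) : Prop := on_sphere m x /\ x m = 0.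

Definition tangent (m : nat) (x u : nat -> R) : Prop := vec (S m) u /\ dot (S m) x u = 0.
Definition unit_tangent (m : nat) (x u : nat -> R) : Prop := tangent m x u /\ dot (S m) u u = 1.

Definition geo (x u : nat -> R) (t : R) : nat -> R := fun k => cos t * x k + sin t * u k.

Definition sphere_grad (m : nat) (rho : (nat -> R) -> R) (x grad : nat -> R) : Prop :=
  tangent m x grad /\
  forall u, unit_tangent m x u ->
    derivable_pt_lim (fun t => rho (geo x u t)) 0 (dot (S m) grad u).

Definition sphere_hess (m : nat) (rho : (nat -> R) -> R) (x : nat -> R)
    (H : (nat -> R) -> (nat -> R) -> R) : Prop :=
  (forall u v, tangent m x u -> tangent m x v -> H u v = H v u) /\
  (forall a b u v w, tangent m x u -> tangent m x v -> tangent m x w ->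
     H (vadd (vscal a u) (vscal b v)) w = a * H u w + b * H v w) /\
  (forall u, unit_tangent m x u -> exists d1 : R -> R,
     (forall t, derivable_pt_lim (fun s => rho (geo x u s)) t (d1 t)) /\
     derivable_pt_lim d1 0 (H u u)).

(* Schouten tensor of g = e^{2 rho} g0 at x, via the conformal change formula
   Sch(g) = Sch(g0) - Hess rho + d rho (x) d rho - 1/2 |d rho|^2 g0, Sch(g0) = 1/2 g0. *)
Definition schouten (m : nat) (grad : nat -> R) (H : (nat -> R) -> (nat -> R) -> R)
    (u v : nat -> R) : R :=
  / 2 * dot (S m) u v - H u v + dot (S m) grad u * dot (S m) grad v
  - / 2 * dot (S m) grad grad * dot (S m) u v.

(* lam (a vector of R^m) lists the eigenvalues of g^{-1} Sch(g) at x, with multiplicity: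
   there is a basis (e_i)_{i<m} of T_x S^m with Sch(g)(e_i, .) = lam_i g(e_i, .). *)
Definition eigenvalues (m : nat) (rho : (nat -> R) -> R) (x grad : nat -> R)
    (H : (nat -> R) -> (nat -> R) -> R) (lam : nat -> R) : Prop :=
  vec m lam /\
  exists e : nat -> nat -> R,
    (forall i, (i < m)%nat -> tangent m x (e i)) /\
    (forall c : nat -> R, (forall k, sumn m (fun i => c i * e i k) = 0) ->
       forall i, (i < m)%nat -> c i = 0) /\
    (forall i w, (i < m)%nat -> tangent m x w ->
       schouten m grad H (e i) w = lam i * (exp (2 * rho x) * dot (S m) (e i) w)).

(* Main.v *)
Require Import Defs.
From Stdlib Require Import Reals Lra Lia.
Open Scope R_scope.
From Stdlib Require Import FunctionalExtensionality.
Open Scope R_scope.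

Lemma sumn_ext n F G : (forall k, (k < n)%nat -> F k = G k) -> sumn n F = sumn n G.
Proof.
  induction n; simpl; intros H; auto.
  rewrite IHn by (intros; apply H; lia). rewrite H by lia. reflexivity.
Qed.

Lemma sumn_plus n F G : sumn n (fun k => F k + G k) = sumn n F + sumn n G.
Proof. induction n; simpl; [lra|]. rewrite IHn. lra. Qed.

Lemma sumn_scal n a F : sumn n (fun k => a * F k) = a * sumn n F.
Proof. induction n; simpl; [lra|]. rewrite IHn. lra. Qed.

Lemma sumn_nonneg n F : (forall k, (k < n)%nat -> 0 <= F k) -> 0 <= sumn n F.
Proof. induction n; simpl; intros H; [lra|]. assert (0 <= F n) by (apply H; lia).
  assert (0 <= sumn n F) by (apply IHn; intros; apply H; lia). lra. Qed.

Lemma sumn_term n F k : (forall k, (k < n)%nat -> 0 <= F k) -> (k < n)%nat -> F k <= sumn n F.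
Proof.
  induction n; simpl; intros H Hk; [lia|].
  destruct (Nat.eq_dec k n) as [->|Hne].
  - assert (0 <= sumn n F) by (apply sumn_nonneg; intros; apply H; lia). lra.
  - assert (F k <= sumn n F) by (apply IHn; [intros; apply H; lia| lia]).
    assert (0 <= F n) by (apply H; lia). lra.
Qed.

Lemma sumn_le n F G : (forall k, (k < n)%nat -> F k <= G k) -> sumn n F <= sumn n G.
Proof. induction n; simpl; intros H; [lra|].
  assert (F n <= G n) by (apply H; lia).
  assert (sumn n F <= sumn n G) by (apply IHn; intros; apply H; lia). lra. Qed.

Lemma sumn_const n c : sumn n (fun _ => c) = INR n * c.
Proof. induction n; simpl sumn; [simpl; lra|]. rewrite IHn, S_INR. lra. Qed.

Lemma sumn_indic n i F : (i < n)%nat ->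
  sumn n (fun j => (if Nat.eqb j i then 1 else 0) * F j) = F i.
Proof.
  induction n; simpl; intros Hi; [lia|].
  destruct (Nat.eq_dec i n) as [->|Hne].
  - rewrite Nat.eqb_refl.
    rewrite (sumn_ext n _ (fun _ => 0)).
    + rewrite sumn_const. lra.
    + intros k Hk. destruct (Nat.eqb_spec k n); [lia|lra].
  - rewrite IHn by lia. destruct (Nat.eqb_spec n i); [lia|lra].
Qed.

Lemma dot_sym n x y : dot n x y = dot n y x.
Proof. unfold dot. apply sumn_ext. intros; ring. Qed.

Lemma dot_nonneg n x : 0 <= dot n x x.
Proof. unfold dot. apply sumn_nonneg. intros. nra. Qed.

Lemma dot_zero n x : dot n x x = 0 -> forall k, (k < n)%nat -> x k = 0.
Proof.
  intros H k Hk. assert (x k * x k <= dot n x x).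
  { unfold dot. apply (sumn_term n (fun k => x k * x k)); auto. intros; nra. }
  nra.
Qed.

Lemma dot_zero_l n x y : dot n x x = 0 -> dot n x y = 0.
Proof.
  intros H. unfold dot. rewrite (sumn_ext n _ (fun _ => 0)).
  - rewrite sumn_const. ring.
  - intros k Hk. rewrite (dot_zero n x H k Hk). ring.
Qed.

Lemma coord_le1 n x k : dot n x x = 1 -> (k < n)%nat -> Rabs (x k) <= 1.
Proof.
  intros H Hk. assert (x k * x k <= dot n x x).
  { unfold dot. apply (sumn_term n (fun k => x k * x k)); auto. intros; nra. }
  rewrite H in H0. apply Rabs_le. nra.
Qed.

Lemma dot_lin n a b x y z :
  dot n (fun k => a * x k + b * y k) z = a * dot n x z + b * dot n y z.
Proof.
  unfold dot. rewrite <- !sumn_scal, <- sumn_plus. apply sumn_ext. intros; ring.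
Qed.

Lemma dot_lin_r n a b x y z :
  dot n z (fun k => a * x k + b * y k) = a * dot n z x + b * dot n z y.
Proof. rewrite dot_sym, dot_lin, (dot_sym n x), (dot_sym n y). ring. Qed.

Lemma geo_sphere m x u t : on_sphere m x -> unit_tangent m x u -> on_sphere m (geo x u t).
Proof.
  intros [Hv Hx] [[Hu Hxu] Huu]. split.
  - intros k Hk. unfold geo. rewrite Hv, Hu by auto. ring.
  - unfold geo. rewrite dot_lin, !dot_lin_r. rewrite (dot_sym _ u x), Hx, Hxu, Huu.
    pose proof (sin2_cos2 t). unfold Rsqr in H. lra.
Qed.

Lemma geo_0 x u : geo x u 0 = x.
Proof. apply functional_extensionality. intro k. unfold geo. rewrite cos_0, sin_0. ring. Qed.

Lemma normalize_unit m x g : tangent m x g -> 0 < dot (S m) g g ->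
  unit_tangent m x (vscal (/ sqrt (dot (S m) g g)) g) /\
  dot (S m) g (vscal (/ sqrt (dot (S m) g g)) g) = sqrt (dot (S m) g g).
Proof.
  intros [Hv Hxg] Hpos. set (N := dot (S m) g g) in *.
  assert (Hs : 0 < sqrt N) by (apply sqrt_lt_R0; auto).
  assert (HsN : sqrt N * sqrt N = N) by (apply sqrt_sqrt; lra).
  unfold vscal.
  assert (E1 : forall y, dot (S m) y (fun k => / sqrt N * g k) = / sqrt N * dot (S m) y g).
  { intro y. unfold dot. rewrite <- sumn_scal. apply sumn_ext. intros; ring. }
  assert (E2 : forall y, dot (S m) (fun k => / sqrt N * g k) y = / sqrt N * dot (S m) g y).
  { intro y. unfold dot. rewrite <- sumn_scal. apply sumn_ext. intros; ring. }
  split; [split; [split|]|].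
  - intros k Hk. rewrite Hv by auto. ring.
  - rewrite E1, Hxg. ring.
  - rewrite E1, E2. fold N. rewrite <- HsN at 3. field. lra.
  - rewrite E1. fold N. rewrite <- HsN at 2. field. lra.
Qed.

Lemma Rabs_le_inv a b : Rabs a <= b -> - b <= a <= b.
Proof. unfold Rabs; destruct (Rcase_abs a); lra. Qed.

Open Scope R_scope.

Lemma deriv_max_right F l d : derivable_pt_lim F 0 l -> 0 < d ->
  (forall t, 0 <= t < d -> F t <= F 0) -> l <= 0.
Proof.
  intros HF Hd Hmax. destruct (Rle_or_lt l 0) as [|Hl]; auto. exfalso.
  destruct (HF (l/2)) as [del Hdel]; [lra|].
  set (h := Rmin del d / 2).
  assert (Hm1 : Rmin del d <= del) by apply Rmin_l.
  assert (Hm2 : Rmin del d <= d) by apply Rmin_r.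
  assert (Hp : 0 < Rmin del d) by (apply Rmin_pos; [apply cond_pos| lra]).
  assert (Hh : 0 < h) by (unfold h; lra).
  specialize (Hdel h ltac:(lra) ltac:(rewrite Rabs_right; unfold h; lra)).
  rewrite Rplus_0_l in Hdel.
  specialize (Hmax h ltac:(unfold h; lra)).
  apply Rabs_def2 in Hdel. destruct Hdel as [_ H1].
  assert (0 < (F h - F 0) / h) by lra.
  assert ((F h - F 0) / h <= 0).
  { unfold Rdiv. assert (0 < / h) by (apply Rinv_0_lt_compat; lra). nra. }
  lra.
Qed.

Lemma deriv2_max_right F d1 h d :
  (forall t, derivable_pt_lim F t (d1 t)) -> d1 0 = 0 -> derivable_pt_lim d1 0 h ->
  0 < d -> (forall t, 0 <= t < d -> F t <= F 0) -> h <= 0.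
Proof.
  intros HF H0 Hd1 Hd Hmax. destruct (Rle_or_lt h 0) as [|Hl]; auto. exfalso.
  destruct (Hd1 (h/2)) as [del Hdel]; [lra|].
  assert (Hpos : forall s, 0 < s < del -> 0 < d1 s).
  { intros s Hs. specialize (Hdel s ltac:(lra) ltac:(rewrite Rabs_right; lra)).
    rewrite Rplus_0_l, H0, Rminus_0_r in Hdel.
    apply Rabs_def2 in Hdel. destruct Hdel as [_ H1].
    assert (0 < d1 s / s) by lra.
    assert (d1 s = d1 s / s * s) by (field; lra). rewrite H2. apply Rmult_lt_0_compat; lra. }
  set (t := Rmin del d / 2).
  assert (Hm1 : Rmin del d <= del) by apply Rmin_l.
  assert (Hm2 : Rmin del d <= d) by apply Rmin_r.
  assert (Hp : 0 < Rmin del d) by (apply Rmin_pos; [apply cond_pos| lra]).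
  assert (Ht : 0 < t) by (unfold t; lra).
  destruct (MVT_cor2 F d1 0 t Ht (fun c _ => HF c)) as [c [Hc1 Hc2]].
  assert (0 < d1 c) by (apply Hpos; unfold t in *; lra).
  specialize (Hmax t ltac:(unfold t; lra)).
  assert (0 < d1 c * (t - 0)) by (apply Rmult_lt_0_compat; lra).
  lra.
Qed.

Lemma stay_hemi m x u : closed_hemi m x -> unit_tangent m x u ->
  (0 <= u m \/ 0 < x m) ->
  exists d, 0 < d /\ forall t, 0 <= t < d -> closed_hemi m (geo x u t).
Proof.
  intros [Hs Hxm] Hu Hcase.
  destruct Hcase as [Hum | Hxm'].
  - exists 1. split; [lra|]. intros t Ht. split; [apply geo_sphere; auto|].
    unfold geo. pose proof PI2_1.
    assert (0 <= cos t) by (apply cos_ge_0; lra).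
    assert (0 <= sin t) by (apply sin_ge_0; lra). nra.
  - exists (x m / 2). split; [lra|]. intros t Ht. split; [apply geo_sphere; auto|].
    unfold geo.
    assert (Hx1 : Rabs (x m) <= 1) by (apply (coord_le1 (S m)); [apply Hs| lia]).
    assert (Hu1 : Rabs (u m) <= 1) by (apply (coord_le1 (S m)); [apply Hu| lia]).
    apply Rabs_le_inv in Hx1. apply Rabs_le_inv in Hu1.
    pose proof PI2_1.
    assert (0 <= cos t) by (apply cos_ge_0; lra).
    assert (0 <= sin t) by (apply sin_ge_0; lra).
    assert (sin t <= t).
    { destruct (Req_dec t 0) as [->|]; [rewrite sin_0; lra| left; apply sin_lt_x; lra]. }
    pose proof (sin2_cos2 t). unfold Rsqr in *.
    assert (cos t <= 1) by (pose proof (COS_bound t); lra).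
    assert (cos t >= 3/4) by nra.
    nra.
Qed.

Lemma tangent_scal m x a u : tangent m x u -> tangent m x (vscal a u).
Proof.
  intros [Hv Hd]. split.
  - intros k Hk. unfold vscal. rewrite Hv by auto. ring.
  - unfold vscal, dot in *. rewrite (sumn_ext _ _ (fun k => a * (x k * u k))) by (intros; ring).
    rewrite sumn_scal, Hd. ring.
Qed.

Lemma hess_lin1 m rho x H a u w : sphere_hess m rho x H -> tangent m x u -> tangent m x w ->
  H (vscal a u) w = a * H u w.
Proof.
  intros [Hsym [Hlin _]] Hu Hw.
  assert (E : vadd (vscal a u) (vscal 0 u) = vscal a u).
  { apply functional_extensionality; intro k; unfold vadd, vscal; ring. }
  rewrite <- E, (Hlin a 0 u u w Hu Hu Hw). ring.
Qed.

Lemma hess_scal m rho x H a u : sphere_hess m rho x H -> tangent m x u ->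
  H (vscal a u) (vscal a u) = a * a * H u u.
Proof.
  intros HH Hu. pose proof (tangent_scal m x a u Hu) as Hau.
  rewrite (hess_lin1 m rho x H a u (vscal a u) HH Hu Hau).
  pose proof HH as [Hsym _]. rewrite (Hsym u (vscal a u) Hu Hau).
  rewrite (hess_lin1 m rho x H a u u HH Hu Hu). ring.
Qed.

Open Scope R_scope.

Lemma dist_bound n x w d : 0 <= d -> (forall k, (k < n)%nat -> Rabs (w k - x k) <= d) ->
  Defs.dist n x w <= (INR n + 1) * d.
Proof.
  intros Hd H. unfold dist.
  assert (Hs : sumn n (fun k => (x k - w k) ^ 2) <= ((INR n + 1) * d) ^ 2).
  { apply Rle_trans with (sumn n (fun _ => d ^ 2)).
    - apply sumn_le. intros k Hk. specialize (H k Hk). apply Rabs_le_inv in H. nra.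
    - rewrite sumn_const. pose proof (pos_INR n). nra. }
  apply Rle_trans with (sqrt (((INR n + 1) * d) ^ 2)).
  - apply sqrt_le_1_alt; auto.
  - rewrite sqrt_pow2; [lra|]. pose proof (pos_INR n). nra.
Qed.

Lemma deriv_translate G t l : derivable_pt_lim (fun s => G (t + s)) 0 l -> derivable_pt_lim G t l.
Proof.
  intros H eps Heps. destruct (H eps Heps) as [del Hdel]. exists del.
  intros h Hh Hhd. specialize (Hdel h Hh Hhd).
  rewrite Rplus_0_l, Rplus_0_r in Hdel. exact Hdel.
Qed.

Lemma mvt_bound0 G G' d M :
  (forall t, Rabs t <= Rabs d -> derivable_pt_lim G t (G' t)) ->
  (forall t, Rabs t <= Rabs d -> Rabs (G' t) <= M) ->
  Rabs (G d - G 0) <= M * Rabs d.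
Proof.
  intros HD HB. destruct (Rtotal_order d 0) as [Hlt|[Heq|Hgt]].
  - destruct (MVT_cor2 G G' d 0 Hlt) as [c [Hc1 Hc2]].
    { intros c Hc. apply HD. rewrite !Rabs_left1 by lra. unfold Rabs. destruct (Rcase_abs c); lra. }
    assert (Hb : Rabs (G' c) <= M).
    { apply HB. rewrite (Rabs_left1 d) by lra. rewrite Rabs_left1 by lra. lra. }
    replace (G d - G 0) with (- (G' c * (0 - d))) by lra.
    rewrite Rabs_Ropp, Rabs_mult, (Rabs_right (0 - d)) by lra.
    rewrite (Rabs_left1 d) by lra. pose proof (Rabs_pos (G' c)). nra.
  - subst. replace (G 0 - G 0) with 0 by ring. rewrite Rabs_R0.
    assert (Rabs (G' 0) <= M) by (apply HB; lra). pose proof (Rabs_pos (G' 0)). nra.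
  - destruct (MVT_cor2 G G' 0 d Hgt) as [c [Hc1 Hc2]].
    { intros c Hc. apply HD. rewrite !Rabs_right by lra. lra. }
    assert (Hb : Rabs (G' c) <= M).
    { apply HB. rewrite !Rabs_right by lra. lra. }
    rewrite Hc1, Rabs_mult, (Rabs_right (d - 0)) by lra.
    rewrite (Rabs_right d) by lra. pose proof (Rabs_pos (G' c)). nra.
Qed.

Lemma shift_shift z i t s : shift (shift z i t) i s = shift z i (t + s).
Proof.
  apply functional_extensionality; intro k. unfold shift.
  destruct (Nat.eqb k i); ring.
Qed.

Lemma shift_0 z i : shift z i 0 = z.
Proof. apply functional_extensionality; intro k. unfold shift. destruct (Nat.eqb k i); ring. Qed.

Lemma vec_shift n z i t : vec n z -> (i < n)%nat -> vec n (shift z i t).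
Proof.
  intros Hz Hi k Hk. unfold shift. destruct (Nat.eqb_spec k i); [lia|]. auto.
Qed.

Lemma D1_bound n (D1 : nat -> (nat -> R) -> R) x :
  (forall i, (i < n)%nat -> forall eps, 0 < eps -> exists delta, 0 < delta /\
       forall y, vec n y -> Defs.dist n x y < delta -> Rabs (D1 i y - D1 i x) < eps) ->
  forall j, (j <= n)%nat -> exists d0 M, 0 < d0 /\ 0 <= M /\
    forall i w, (i < j)%nat -> vec n w -> Defs.dist n x w < d0 -> Rabs (D1 i w) <= M.
Proof.
  intros HC j. induction j; intros Hj.
  - exists 1, 0. repeat split; try lra. intros; lia.
  - destruct IHj as [d0 [M [Hd0 [HM HB]]]]; [lia|].
    destruct (HC j ltac:(lia) 1 ltac:(lra)) as [dj [Hdj Hj1]].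
    exists (Rmin d0 dj), (Rmax M (Rabs (D1 j x) + 1)).
    split; [apply Rmin_pos; auto|]. split.
    { apply Rle_trans with M; auto. apply Rmax_l. }
    intros i w Hi Hw Hd.
    assert (Hd1 : Defs.dist n x w < d0) by (pose proof (Rmin_l d0 dj); lra).
    assert (Hd2 : Defs.dist n x w < dj) by (pose proof (Rmin_r d0 dj); lra).
    destruct (Nat.eq_dec i j) as [->|Hne].
    + specialize (Hj1 w Hw Hd2).
      apply Rle_trans with (Rabs (D1 j x) + 1); [|apply Rmax_r].
      pose proof (Rabs_triang_inv (D1 j w) (D1 j x)). lra.
    + apply Rle_trans with M; [|apply Rmax_l]. apply HB; auto. lia.
Qed.

Lemma rho_cont n alpha rho : C2alpha n alpha rho ->
  forall x, vec n x -> forall eps, 0 < eps -> exists delta, 0 < delta /\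
    forall y, vec n y -> (forall k, (k < n)%nat -> Rabs (y k - x k) < delta) ->
    Rabs (rho y - rho x) < eps.
Proof.
  intros [D1 [D2 [C [H1 [_ [H3 _]]]]]] x Hx eps Heps.
  destruct (D1_bound n D1 x (fun i Hi => H3 x i Hx Hi) n (le_n n)) as [d0 [M [Hd0 [HM HB]]]].
  pose proof (pos_INR n) as Hn.
  set (Q := (INR n + 1) * (M + 1)).
  assert (HQ : 0 < Q) by (unfold Q; nra).
  set (dl := Rmin (d0 / (2 * (INR n + 1))) (eps / Q)).
  assert (Hdl : 0 < dl).
  { unfold dl. apply Rmin_pos; apply Rdiv_lt_0_compat; nra. }
  assert (Hdl1 : dl * (2 * (INR n + 1)) <= d0).
  { assert (dl <= d0 / (2 * (INR n + 1))) by apply Rmin_l.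
    apply Rmult_le_compat_r with (r := 2 * (INR n + 1)) in H; [|lra].
    unfold Rdiv in H. rewrite Rmult_assoc, Rinv_l in H; lra. }
  assert (Hdl2 : dl * Q <= eps).
  { assert (dl <= eps / Q) by apply Rmin_r.
    apply Rmult_le_compat_r with (r := Q) in H; [|lra].
    unfold Rdiv in H. rewrite Rmult_assoc, Rinv_l in H; lra. }
  exists dl. split; auto. intros y Hy Hyx.
  set (z := fun j k => if Nat.ltb k j then y k else x k).
  assert (Hzv : forall j, vec n (z j)).
  { intros j k Hk. unfold z. destruct (Nat.ltb k j); auto. }
  assert (Hstep : forall j, (j < n)%nat -> z (S j) = shift (z j) j (y j - x j)).
  { intros j Hj. apply functional_extensionality; intro k. unfold z, shift.
    destruct (Nat.eqb_spec k j) as [->|Hne].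
    - rewrite Nat.ltb_irrefl. replace (Nat.ltb j (S j)) with true by (symmetry; apply Nat.ltb_lt; lia). ring.
    - destruct (Nat.ltb_spec k (S j)); destruct (Nat.ltb_spec k j); try lia; reflexivity. }
  assert (Hind : forall j, (j <= n)%nat -> Rabs (rho (z j) - rho x) <= INR j * M * dl).
  { induction j; intros Hj.
    - replace (z 0%nat) with x.
      + replace (rho x - rho x) with 0 by ring. rewrite Rabs_R0. simpl. lra.
      + apply functional_extensionality; intro k. reflexivity.
    - rewrite (Hstep j ltac:(lia)).
      set (d := y j - x j).
      assert (Hdd : Rabs d < dl) by (apply Hyx; lia).
      assert (Hmv : Rabs (rho (shift (z j) j d) - rho (shift (z j) j 0)) <= M * Rabs d).
      { apply (mvt_bound0 (fun t => rho (shift (z j) j t)) (fun t => D1 j (shift (z j) j t))).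
        - intros t Ht. apply deriv_translate.
          assert (E : (fun s => rho (shift (z j) j (t + s))) = (fun s => rho (shift (shift (z j) j t) j s))).
          { apply functional_extensionality; intro s. rewrite shift_shift. reflexivity. }
          rewrite E. apply H1; [apply vec_shift; auto; lia| lia].
        - intros t Ht. apply HB; [lia| apply vec_shift; auto; lia|].
          apply Rle_lt_trans with ((INR n + 1) * dl); [|nra].
          apply dist_bound; [lra|]. intros k Hk. unfold shift, z.
          destruct (Nat.eqb_spec k j) as [->|Hne].
          + rewrite Nat.ltb_irrefl. replace (x j + t - x j) with t by ring. lra.
          + destruct (Nat.ltb k j).
            * left. apply Hyx; auto.
            * replace (x k - x k) with 0 by ring. rewrite Rabs_R0. lra. }
      rewrite shift_0 in Hmv.
      specialize (IHj ltac:(lia)).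
      rewrite S_INR.
      pose proof (Rabs_triang (rho (shift (z j) j d) - rho (z j)) (rho (z j) - rho x)).
      replace (rho (shift (z j) j d) - rho (z j) + (rho (z j) - rho x)) with
        (rho (shift (z j) j d) - rho x) in H by ring.
      assert (M * Rabs d <= M * dl) by (apply Rmult_le_compat_l; lra).
      nra. }
  replace y with (z n).
  - specialize (Hind n (le_n n)).
    assert (INR n * M * dl < Q * dl).
    { apply Rmult_lt_compat_r; auto. unfold Q. nra. }
    nra.
  - apply functional_extensionality; intro k. unfold z.
    destruct (Nat.ltb_spec k n); auto. rewrite Hx, Hy by auto. reflexivity.
Qed.

Open Scope R_scope.
From HB Require structures.
From mathcomp Require all_boot all_order all_algebra.
From mathcomp Require all_classical all_reals all_analysis.
From mathcomp Require Rstruct Rstruct_topology.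

Module Cpt.
Import HB.structures.
Import mathcomp.boot.all_boot mathcomp.order.all_order mathcomp.algebra.all_algebra.
Import mathcomp.classical.all_classical mathcomp.reals.all_reals mathcomp.analysis.all_analysis.
Import mathcomp.reals_stdlib.Rstruct mathcomp.analysis_stdlib.Rstruct_topology.
Import Order.TTheory GRing.Theory Num.Theory.
Import numFieldNormedType.Exports.
Open Scope R_scope.

Definition emb (m : nat) (v : 'rV[R]_m.+1) : nat -> R :=
  fun k => if (k < m.+1)%N then v ord0 (inord k) else 0%R.

Lemma emb_vec m v : vec (S m) (emb m v).
Proof. intros k Hk. unfold emb. case: ifP => // /ssrnat.ltP. lia. Qed.

Lemma emb_cont m k : continuous (fun v : 'rV[R]_m.+1 => emb m v k).
Proof.
  unfold emb; destruct (k < m.+1)%N; [exact: coord_continuous | exact: cst_continuous].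
Qed.

Lemma sumn_cont m n (F : nat -> 'rV[R]_m.+1 -> R) :
  (forall k, continuous (F k)) -> continuous (fun v => Defs.sumn n (fun k => F k v)).
Proof.
  move=> HF; elim: n => [|n IH] /=; first exact: cst_continuous.
  move=> x. have := @continuousD R R^o _ _ _ x (IH x) (HF n x). exact.
Qed.

Lemma bridge m (f : 'rV[R]_m.+1 -> R) :
  (forall (v : 'rV[R]_m.+1) eps, 0 < eps -> exists delta, 0 < delta /\ forall w : 'rV[R]_m.+1,
     (forall i, Rabs (w ord0 i - v ord0 i) < delta) -> Rabs (f w - f v) < eps) ->
  continuous f.
Proof.
  move=> H v; apply/(@cvgrPdist_lt R R^o _ (nbhs v) (nbhs_filter v)) => e /RltP e0.
  have [d [d0 Hd]] := H v e e0.
  have Hn : nbhs v (fun w : 'rV[R]_m.+1 => forall i : 'I_m.+1, Rabs (w ord0 i - v ord0 i) < d).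
    apply/nbhs_ballP. exists d; first by apply/RltP.
    move=> w Hw i. move: Hw. rewrite /ball /= /mx_ball => -[_ /(_ ord0 i)]. rewrite /ball /= distrC. move/RltP. done.
  apply: filterS Hn => w Hw. rewrite distrC. apply/RltP. exact: Hd.
Qed.

Lemma emb_row m (y : nat -> R) : vec (S m) y -> emb m (\row_(i < m.+1) y i) = y.
Proof.
  move=> Hy. apply: functional_extensionality => k. rewrite /emb.
  case: ifP => [Hk|/negbT Hk].
  - by rewrite mxE inordK.
  - rewrite Hy //. rewrite -ltnNge in Hk. apply/ssrnat.leP. done.
Qed.

Definition npole (m : nat) : nat -> R := fun k => if Nat.eqb k m then 1%R else 0%R.

Lemma npole_hemi m : closed_hemi m (npole m).
Proof.
  split; [split|].
  - move=> k Hk. rewrite /npole. case: (Nat.eqb_spec k m) => //. lia.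
  - rewrite /dot. transitivity (npole m m).
    + exact: (sumn_indic (S m) m (npole m) (Nat.lt_succ_diag_r m)).
    + by rewrite /npole Nat.eqb_refl.
  - rewrite /npole Nat.eqb_refl. apply Rle_0_1.
Qed.

Local Open Scope classical_set_scope.
Local Open Scope R_scope.
Lemma hemi_max m (rho : (nat -> R) -> R) :
  (forall x, vec (S m) x -> forall eps, 0 < eps -> exists delta, 0 < delta /\
     forall y, vec (S m) y -> (forall k, lt k (S m) -> Rabs (y k - x k) < delta) ->
     Rabs (rho y - rho x) < eps) ->
  exists x0, closed_hemi m x0 /\ forall y, closed_hemi m y -> rho y <= rho x0.
Proof.
  move=> Hc.
  pose A := [set v : 'rV[R]_m.+1 | closed_hemi m (emb m v)].
  have Aeq : A = (fun v => dot (S m) (emb m v) (emb m v)) @^-1` [set 1%R] `&`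
                 (fun v => emb m v m) @^-1` [set x | (0 <= x)%R].
    apply/seteqP; split => v /=.
    - move=> [[_ H1] H2]. split => //. by apply/RleP.
    - move=> [H1 /RleP H2]. split => //. split => //. exact: emb_vec.
  have Acl : closed A.
    rewrite Aeq. apply: closedI.
    - apply: preimage_closed; last exact: closed_eq.
      move=> v _. apply: sumn_cont => k v'.
      exact: (@continuousM R _ _ _ v' (emb_cont m k v') (emb_cont m k v')).
    - apply: preimage_closed; last exact: closed_ge. move=> v _; exact: emb_cont.
  have Acpt : compact A.
    have K := @rV_compact R m.+1 (fun _ : 'I_m.+1 => `[(-1)%R, 1%R]%classic)
              (fun _ => @segment_compact R (-1)%R 1%R).
    apply: (subclosed_compact Acl K).
    move=> v [[_ Hd] _] i /=.
    have := coord_le1 (S m) (emb m v) i Hd (ssrnat.ltP (ltn_ord i)).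
    rewrite /emb ltn_ord inord_val => /Rabs_le_inv [H1 H2].
    rewrite in_itv /=; apply/andP; split; apply/RleP => //.
  have A0 : A !=set0.
    exists (\row_(i < m.+1) npole m i)%R. rewrite /A /= emb_row; first exact: npole_hemi.
    exact: (proj1 (proj1 (npole_hemi m))).
  have Fc : {within A, continuous (fun v => rho (emb m v))}.
    apply: continuous_subspaceT. apply: bridge => v eps Heps.
    have [d [d0 Hd]] := Hc (emb m v) (emb_vec m v) eps Heps.
    exists d; split => // w Hw. apply: Hd; first exact: emb_vec.
    move=> k Hk. have Hk' : (k < m.+1)%N by apply/ssrnat.ltP; exact: Hk. rewrite /emb Hk'. exact: Hw.
  have [c cA cmax] := EVT_max_rV A0 Acpt Fc.
  exists (emb m c). split; first by move: cA; rewrite inE.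
  move=> y Hy. rewrite -(emb_row m y (proj1 (proj1 Hy))). apply/RleP. apply: cmax.
  by rewrite inE /A /= emb_row //; exact: (proj1 (proj1 Hy)).
Qed.
End Cpt.

Open Scope R_scope.

Lemma unit_neg m x u : unit_tangent m x u -> unit_tangent m x (vscal (-1) u).
Proof.
  intros [Ht Hu]. split; [apply tangent_scal; auto|].
  unfold dot, vscal in *. rewrite <- Hu. apply sumn_ext. intros; ring.
Qed.

Lemma hess_nonpos m rho x0 grad H u :
  closed_hemi m x0 -> (forall y, closed_hemi m y -> rho y <= rho x0) ->
  sphere_grad m rho x0 grad -> (forall v, dot (S m) grad v = 0) ->
  sphere_hess m rho x0 H -> unit_tangent m x0 u -> (0 <= u m \/ 0 < x0 m) -> H u u <= 0.
Proof.
  intros Hx0 Hmax [_ Hgd] Hg0 [_ [_ Hh2]] Hu Hc.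
  destruct (Hh2 u Hu) as [d1 [Hd1 Hd1']].
  assert (E0 : d1 0 = 0).
  { transitivity (dot (S m) grad u); [|apply Hg0]. apply (uniqueness_limite (fun s => rho (geo x0 u s)) 0); [apply Hd1 | apply Hgd; auto]. }
  destruct (stay_hemi m x0 u Hx0 Hu Hc) as [d [Hd Hst]].
  apply (deriv2_max_right (fun s => rho (geo x0 u s)) d1 (H u u) d Hd1 E0 Hd1' Hd).
  intros t Ht. rewrite geo_0. apply Hmax, Hst; auto.
Qed.

Lemma grad_max_zero m rho x0 grad u :
  closed_hemi m x0 -> (forall y, closed_hemi m y -> rho y <= rho x0) ->
  sphere_grad m rho x0 grad -> unit_tangent m x0 u -> (0 <= u m \/ 0 < x0 m) ->
  dot (S m) grad u <= 0.
Proof.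
  intros Hx0 Hmax [_ Hgd] Hu Hc.
  destruct (stay_hemi m x0 u Hx0 Hu Hc) as [d [Hd Hst]].
  apply (deriv_max_right (fun s => rho (geo x0 u s)) _ d (Hgd u Hu) Hd).
  intros t Ht. rewrite geo_0. apply Hmax, Hst; auto.
Qed.

Theorem mainTheorem10 (m : nat) (Hm : (3 <= m)%nat)
    (f : (nat -> R) -> R) (Gam : (nat -> R) -> Prop) (Hell : elliptic_data m f Gam)
    (c : R) (Hc : c <= 0) (alpha : R) (Halpha : 0 < alpha < 1) :
  ~ exists rho : (nat -> R) -> R,
      C2alpha (S m) alpha rho /\
      (forall x, closed_hemi m x ->
         exists grad H lam,
           sphere_grad m rho x grad /\ sphere_hess m rho x H /\
           eigenvalues m rho x grad H lam /\ closure m Gam lam /\ f lam = 0) /\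
      (forall x, hemi_boundary m x ->
         exists grad, sphere_grad m rho x grad /\ - exp (- rho x) * grad m = c).
Proof.
  intros [rho [Hreg [Hint Hbd]]].
  destruct Hell as [_ [_ [_ [_ [_ [HGm [_ [_ [_ [_ [_ [Hfpos _]]]]]]]]]]]].
  destruct (Cpt.hemi_max m rho (rho_cont (S m) alpha rho Hreg)) as [x0 [Hx0 Hmax]].
  destruct (Hint x0 Hx0) as [grad [H [lam [Hg [Hh [Heig [Hcl Hf0]]]]]]].
  assert (Hgz : dot (S m) grad grad = 0).
  { destruct (Rle_lt_or_eq_dec 0 _ (dot_nonneg (S m) grad)) as [Hp|]; [exfalso|auto].
    pose proof Hg as [Htg Hgd].
    destruct (normalize_unit m x0 grad Htg Hp) as [Hu Hdu].
    set (u := vscal (/ sqrt (dot (S m) grad grad)) grad) in *.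
    assert (Hsq : 0 < sqrt (dot (S m) grad grad)) by (apply sqrt_lt_R0; auto).
    destruct (Rlt_or_le 0 (x0 m)) as [Hin|Hb].
    - pose proof (grad_max_zero m rho x0 grad u Hx0 Hmax Hg Hu (or_intror Hin)). lra.
    - assert (Hx0m : x0 m = 0) by (destruct Hx0; lra).
      destruct (Hbd x0 (conj (proj1 Hx0) Hx0m)) as [g' [Hg' Hc']].
      pose proof Hg' as [Htg' Hgd'].
      assert (Hg'm : 0 <= g' m).
      { pose proof (exp_pos (- rho x0)). nra. }
      assert (Hg'z : dot (S m) g' g' = 0).
      { destruct (Rle_lt_or_eq_dec 0 _ (dot_nonneg (S m) g')) as [Hp'|]; [exfalso|auto].
        destruct (normalize_unit m x0 g' Htg' Hp') as [Hu' Hdu'].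
        assert (Hsq' : 0 < sqrt (dot (S m) g' g')) by (apply sqrt_lt_R0; auto).
        assert (0 <= vscal (/ sqrt (dot (S m) g' g')) g' m).
        { unfold vscal. apply Rmult_le_pos; auto. left. apply Rinv_0_lt_compat; auto. }
        pose proof (grad_max_zero m rho x0 g' _ Hx0 Hmax Hg' Hu' (or_introl H0)). lra. }
      assert (E : dot (S m) grad u = dot (S m) g' u).
      { apply (uniqueness_limite (fun t => rho (geo x0 u t)) 0); auto. }
      rewrite (dot_zero_l (S m) g' u Hg'z) in E. lra. }
  assert (Hg0 : forall v, dot (S m) grad v = 0) by (intro; apply dot_zero_l; auto).
  assert (Hlam : forall i, (i < m)%nat -> 0 < lam i).
  { intros i Hi. destruct Heig as [Hlv [e [Het [Hind Heq]]]].
    assert (Hne : 0 < dot (S m) (e i) (e i)).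
    { destruct (Rle_lt_or_eq_dec 0 _ (dot_nonneg (S m) (e i))) as [|H0]; auto. exfalso.
      set (cc := fun j => if Nat.eqb j i then 1 else 0).
      assert (Hs : forall k, sumn m (fun j => cc j * e j k) = 0).
      { intro k. unfold cc. rewrite (sumn_indic m i (fun j => e j k) Hi).
        destruct (Nat.lt_ge_cases k (S m)).
        - apply (dot_zero (S m)); auto.
        - apply (proj1 (Het i Hi)). lia. }
      specialize (Hind cc Hs i Hi). unfold cc in Hind. rewrite Nat.eqb_refl in Hind. lra. }
    set (Ne := dot (S m) (e i) (e i)) in *.
    destruct (normalize_unit m x0 (e i) (Het i Hi) Hne) as [Hu _].
    set (u := vscal (/ sqrt Ne) (e i)) in *.
    assert (Hsq : 0 < sqrt Ne) by (apply sqrt_lt_R0; auto).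
    assert (HsN : sqrt Ne * sqrt Ne = Ne) by (apply sqrt_sqrt; lra).
    assert (Huu : H u u <= 0).
    { destruct (Rle_or_lt 0 (u m)) as [Hum|Hum].
      - apply (hess_nonpos m rho x0 grad H u Hx0 Hmax Hg Hg0 Hh Hu (or_introl Hum)).
      - pose proof (unit_neg m x0 u Hu) as Hu2.
        assert (Hu2m : 0 <= vscal (-1) u m) by (unfold vscal; lra).
        pose proof (hess_nonpos m rho x0 grad H _ Hx0 Hmax Hg Hg0 Hh Hu2 (or_introl Hu2m)).
        rewrite (hess_scal m rho x0 H (-1) u Hh (proj1 Hu)) in H0. lra. }
    assert (Eei : e i = vscal (sqrt Ne) u).
    { apply functional_extensionality; intro k. unfold u, vscal. field. lra. }
    assert (Hee : H (e i) (e i) = Ne * H u u).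
    { rewrite Eei, (hess_scal m rho x0 H (sqrt Ne) u Hh (proj1 Hu)), HsN. reflexivity. }
    specialize (Heq i (e i) Hi (Het i Hi)).
    unfold schouten in Heq. rewrite !Hg0 in Heq. fold Ne in Heq. rewrite Hee in Heq.
    pose proof (exp_pos (2 * rho x0)).
    destruct (Rle_or_lt (lam i) 0) as [Hl|]; auto. exfalso.
    assert (lam i * (exp (2 * rho x0) * Ne) <= 0).
    { assert (0 < exp (2 * rho x0) * Ne) by (apply Rmult_lt_0_compat; lra). nra. }
    nra. }
  destruct Heig as [Hlv _].
  pose proof (Hfpos lam (HGm lam Hlv Hlam)). lra.
Qed.
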